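(* There exist absolute positive constants $c,C$ such that the following holds. Let ${\cal J}$ be a finite index set and $X_i$, $i\in{\cal J}$, independent $\{0,1\}$-valued random variables with $P(X_i=1)=p_i$, $\lambda=\sum_{i\in{\cal J}}p_i>0$, $\tilde p=\max_{i\in{\cal J}}p_i$, and $W=\sum_{i\in{\cal J}}X_i$. Let $Y\sim\mathrm{Poi}(\lambda)$. Then for every integer $k\ge\lambda$ with $\tilde p(1+\xi^2)\le c$, where $\xi=(k-\lambda)/\sqrt\lambda$, $$\Big|\frac{P(W\ge k)}{P(Y\ge k)}-1\Big|\le C\tilde p(1+\xi^2).$$
   Context: $\mathrm{Poi}(\lambda)$ is the Poisson distribution with mean $\lambda$. *)

(* Defs.v *)
From Stdlib Require Import Reals Lra Lia Arith List.
Open Scope R_scope.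

(* The index set J is identified with {0, ..., n-1}; p i = P(X_i = 1). *)

Fixpoint outcomes (n : nat) : list (list bool) :=
  match n with
  | O => nil :: nil
  | S m => concat (map (fun o => (o ++ true :: nil) :: (o ++ false :: nil) :: nil)
                       (outcomes m))
  end.

(* Probability of an outcome under independence: prod_i p_i^{x_i}(1-p_i)^{1-x_i},
   where the head of the list is index i. *)
Fixpoint outcome_prob (p : nat -> R) (i : nat) (o : list bool) : R :=
  match o with
  | nil => 1
  | b :: o' => (if b then p i else 1 - p i) * outcome_prob p (S i) o'
  end.

Definition count_ones (o : list bool) : nat := length (filter (fun b => b) o).

Definition bernoulli_sum_tail (p : nat -> R) (n k : nat) : R :=
  fold_right Rplus 0
    (map (fun o => if (k <=? count_ones o)%nat then outcome_prob p 0 o else 0)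
         (outcomes n)).

Definition lam (p : nat -> R) (n : nat) : R :=
  fold_right Rplus 0 (map p (seq 0 n)).

(* tilde p = max_{i<n} p_i (p_i >= 0, and n >= 1 whenever lambda > 0) *)
Definition pmax (p : nat -> R) (n : nat) : R :=
  fold_right Rmax 0 (map p (seq 0 n)).

Definition poisson_pmf (l : R) (j : nat) : R := exp (- l) * l ^ j / INR (fact j).

Definition poisson_tail (l : R) (k : nat) : R :=
  match k with
  | O => 1
  | S k' => 1 - sum_f_R0 (poisson_pmf l) k'
  end.

(* Main.v *)
Require Import Defs.
From Stdlib Require Import Reals Lra Lia List ZArith.
Open Scope R_scope.


Fixpoint Ex (L : list R) (g : nat -> R) : R :=
  match L with
  | nil => g O
  | a :: L' => (1 - a) * Ex L' g + a * Ex L' (fun w => g (S w))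
  end.

Lemma Ex_ext : forall L g h, (forall w, g w = h w) -> Ex L g = Ex L h.
Proof.
  induction L; intros g h H; simpl; auto.
  rewrite (IHL g h H). rewrite (IHL (fun w => g (S w)) (fun w => h (S w))); auto.
Qed.

Lemma Ex_lin : forall L g h a b,
  Ex L (fun w => a * g w + b * h w) = a * Ex L g + b * Ex L h.
Proof.
  induction L; intros g h x y; simpl; auto.
  rewrite IHL. rewrite (IHL (fun w => g (S w)) (fun w => h (S w))). ring.
Qed.

Lemma Ex_const : forall L c, Ex L (fun _ => c) = c.
Proof. induction L; intros c; simpl; auto. rewrite !IHL. ring. Qed.

Definition okL (L : list R) := forall x, In x L -> 0 <= x <= 1.

Lemma okL_cons : forall a L, okL (a :: L) -> 0 <= a <= 1 /\ okL L.
Proof. unfold okL; intros a L H; split; [apply H; simpl; auto | intros x Hx; apply H; simpl; auto]. Qed.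

Lemma Ex_mono : forall L g h, okL L -> (forall w, g w <= h w) -> Ex L g <= Ex L h.
Proof.
  induction L; intros g h HL H; simpl; auto.
  destruct (okL_cons _ _ HL) as [Ha HL'].
  pose proof (IHL g h HL' H). pose proof (IHL (fun w => g (S w)) (fun w => h (S w)) HL' (fun w => H (S w))).
  nra.
Qed.

Lemma Ex_zero : forall L g, (forall x, In x L -> x = 0) -> Ex L g = g O.
Proof.
  induction L; intros g H; simpl; auto.
  rewrite (H a (or_introl eq_refl)). rewrite IHL; [ring|].
  intros; apply H; simpl; auto.
Qed.

Definition ind (m w : nat) : R := if (m <=? w)%nat then 1 else 0.

Lemma ind_bounds : forall m w, 0 <= ind m w <= 1.
Proof. intros; unfold ind; destruct (m <=? w)%nat; lra. Qed.

Lemma Ex_ind_bounds : forall L m, okL L -> 0 <= Ex L (ind m) <= 1.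
Proof.
  intros L m HL; split.
  - apply Rle_trans with (Ex L (fun _ => 0)); [rewrite Ex_const; lra|]. apply Ex_mono; auto. intros; apply ind_bounds.
  - apply Rle_trans with (Ex L (fun _ => 1)); [|rewrite Ex_const; lra]. apply Ex_mono; auto. intros; apply ind_bounds.
Qed.

Fixpoint sumL {A} (f : A -> R) (xs : list A) : R :=
  match xs with nil => 0 | x :: xs' => f x + sumL f xs' end.

Lemma sumL_map : forall A B (f : B -> R) (g : A -> B) xs, sumL f (map g xs) = sumL (fun x => f (g x)) xs.
Proof. induction xs; simpl; auto. rewrite IHxs; auto. Qed.

Lemma sumL_ext_in : forall A (f g : A -> R) xs, (forall x, In x xs -> f x = g x) -> sumL f xs = sumL g xs.
Proof. induction xs; intros H; simpl; auto. rewrite H, IHxs; simpl; auto. intros; apply H; simpl; auto. Qed.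

Lemma sumL_lin : forall A (f g : A -> R) a b xs, sumL (fun x => a * f x + b * g x) xs = a * sumL f xs + b * sumL g xs.
Proof. induction xs; simpl; [ring|]. rewrite IHxs; ring. Qed.

Lemma sumL_le_in : forall A (f g : A -> R) xs, (forall x, In x xs -> f x <= g x) -> sumL f xs <= sumL g xs.
Proof. induction xs; intros H; simpl; [lra|]. pose proof (H a (or_introl eq_refl)).
  assert (sumL f xs <= sumL g xs) by (apply IHxs; intros; apply H; simpl; auto). lra. Qed.

Lemma sumL_abs : forall A (f : A -> R) xs, Rabs (sumL f xs) <= sumL (fun x => Rabs (f x)) xs.
Proof. induction xs; simpl. rewrite Rabs_R0; lra.
  eapply Rle_trans; [apply Rabs_triang|]. lra. Qed.

Lemma Ex_sumL : forall A L (c : A -> R) (u : A -> nat -> R) xs,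
  Ex L (fun w => sumL (fun m => c m * u m w) xs) = sumL (fun m => c m * Ex L (u m)) xs.
Proof.
  induction xs; simpl.
  - apply Ex_const.
  - rewrite (Ex_ext L _ (fun w => c a * u a w + 1 * sumL (fun m => c m * u m w) xs)) by (intros; ring).
    rewrite Ex_lin, IHxs; ring.
Qed.

Fixpoint splits (L : list R) : list (R * list R) :=
  match L with
  | nil => nil
  | a :: L' => (a, L') :: map (fun bl => (fst bl, a :: snd bl)) (splits L')
  end.

Definition lamL (L : list R) := fold_right Rplus 0 L.
Definition pmaxL (L : list R) := fold_right Rmax 0 L.

Lemma splits_prop : forall L b l, In (b, l) (splits L) ->
  In b L /\ (forall x, In x l -> In x L) /\ lamL l = lamL L - b /\ (length l < length L)%nat.
Proof.
  induction L; intros b l H; simpl in H; [contradiction|].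
  destruct H as [H|H].
  - inversion H; subst. unfold lamL; simpl. repeat split; auto; try lia; try ring.
  - apply in_map_iff in H. destruct H as [[b' l'] [Heq Hin]]. simpl in Heq. inversion Heq; subst.
    destruct (IHL _ _ Hin) as [H1 [H2 [H3 H4]]]. unfold lamL in *; simpl.
    repeat split; simpl; auto.
    + intros x [Hx|Hx]; auto.
    + rewrite H3; ring.
    + lia.
Qed.

Lemma splits_sum : forall L, sumL fst (splits L) = lamL L.
Proof.
  induction L; simpl; auto. rewrite sumL_map. rewrite (sumL_ext_in _ _ fst); [rewrite IHL; reflexivity| intros; reflexivity].
Qed.

Lemma I1 : forall L g, Ex L (fun w => INR w * g w) =
  sumL (fun bl => fst bl * Ex (snd bl) (fun w => g (S w))) (splits L).
Proof.
  induction L; intros g.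
  - simpl; ring.
  - cbn [Ex splits sumL fst snd]. rewrite sumL_map; cbn [fst snd].
    rewrite (Ex_ext L (fun w => INR (S w) * g (S w)) (fun w => 1 * (INR w * g (S w)) + 1 * g (S w))).
    2:{ intros; rewrite S_INR; ring. }
    rewrite Ex_lin. rewrite IHL. rewrite (IHL (fun w => g (S w))).
    rewrite (sumL_ext_in _ (fun x => fst x * ((1 - a) * Ex (snd x) (fun w => g (S w)) + a * Ex (snd x) (fun w => g (S (S w)))))
       (fun x => (1-a) * (fst x * Ex (snd x) (fun w => g (S w))) + a * (fst x * Ex (snd x) (fun w => g (S (S w)))))).
    2:{ intros; ring. }
    rewrite sumL_lin. ring.
Qed.

Lemma I2 : forall L b l h, In (b, l) (splits L) ->
  Ex L h = (1 - b) * Ex l h + b * Ex l (fun w => h (S w)).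
Proof.
  induction L; intros b l h H; simpl in H; [contradiction|].
  destruct H as [H|H].
  - inversion H; subst. reflexivity.
  - apply in_map_iff in H. destruct H as [[b' l'] [Heq Hin]]. simpl in Heq. inversion Heq; subst.
    simpl. rewrite (IHL _ _ h Hin). rewrite (IHL _ _ (fun w => h (S w)) Hin). ring.
Qed.

Lemma stein_bern : forall L g,
  Ex L (fun w => lamL L * g (S w) - INR w * g w) =
  sumL (fun bl => fst bl ^ 2 * Ex (snd bl) (fun w => g (S (S w)) - g (S w))) (splits L).
Proof.
  intros L g.
  rewrite (Ex_ext L _ (fun w => lamL L * g (S w) + (-1) * (INR w * g w))) by (intros; ring).
  rewrite Ex_lin, I1. rewrite <- splits_sum.
  assert (E: sumL fst (splits L) * Ex L (fun w => g (S w)) =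
    sumL (fun bl => fst bl * ((1 - fst bl) * Ex (snd bl) (fun w => g (S w)) + fst bl * Ex (snd bl) (fun w => g (S (S w))))) (splits L)).
  { assert (forall xs : list (R * list R), (forall bl, In bl xs -> In bl (splits L)) ->
      sumL fst xs * Ex L (fun w => g (S w)) =
      sumL (fun bl => fst bl * ((1 - fst bl) * Ex (snd bl) (fun w => g (S w)) + fst bl * Ex (snd bl) (fun w => g (S (S w))))) xs) as HH.
    { induction xs; intros Hin; simpl; [ring|].
      rewrite <- IHxs by (intros; apply Hin; simpl; auto).
      destruct a as [b l]. simpl. rewrite (I2 L b l (fun w => g (S w))) by (apply Hin; simpl; auto). ring. }
    apply HH; auto. }
  rewrite E.
  replace (sumL (fun bl : R * list R => fst bl * ((1 - fst bl) * Ex (snd bl) (fun w : nat => g (S w)) + fst bl * Ex (snd bl) (fun w : nat => g (S (S w))))) (splits L)) with (1 * sumL (fun bl : R * list R => fst bl * ((1 - fst bl) * Ex (snd bl) (fun w : nat => g (S w)) + fst bl * Ex (snd bl) (fun w : nat => g (S (S w))))) (splits L)) by ring.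
  rewrite <- (sumL_lin _ _ _ 1 (-1)).
  apply sumL_ext_in. intros. rewrite (Ex_ext (snd x) (fun w => g (S (S w)) - g (S w)) (fun w => 1 * g (S (S w)) + (-1) * g (S w))) by (intros; ring).
  rewrite Ex_lin. ring.
Qed.


Lemma fold_sumL : forall A (f : A -> R) xs, fold_right Rplus 0 (map f xs) = sumL f xs.
Proof. induction xs; simpl; auto. rewrite IHxs; auto. Qed.

Lemma sumL_app : forall A (f : A -> R) xs ys, sumL f (xs ++ ys) = sumL f xs + sumL f ys.
Proof. induction xs; intros; simpl; [ring|]. rewrite IHxs; ring. Qed.

Lemma sumL_concat : forall A (f : A -> R) xss, sumL f (concat xss) = sumL (sumL f) xss.
Proof. induction xss; simpl; auto. rewrite sumL_app, IHxss; auto. Qed.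

Lemma outcomes_len : forall n o, In o (outcomes n) -> length o = n.
Proof.
  induction n; simpl; intros o H.
  - destruct H as [H|H]; [subst; auto | contradiction].
  - apply in_concat in H. destruct H as [l [Hl Ho]].
    apply in_map_iff in Hl. destruct Hl as [o' [Heq Hin]]. subst.
    simpl in Ho. destruct Ho as [H|[H|H]]; try contradiction; subst;
    rewrite length_app; simpl; rewrite (IHn o' Hin); lia.
Qed.

Lemma outcome_prob_app : forall p o i b, outcome_prob p i (o ++ b :: nil) =
  outcome_prob p i o * (if b then p (i + length o)%nat else 1 - p (i + length o)%nat).
Proof.
  induction o; intros i b; simpl.
  - rewrite Nat.add_0_r. ring.
  - rewrite IHo. replace (S i + length o)%nat with (i + S (length o))%nat by lia. ring.
Qed.

Lemma count_app : forall o b, count_ones (o ++ b :: nil) = (count_ones o + (if b then 1 else 0))%nat.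
Proof.
  intros. unfold count_ones. rewrite filter_app, length_app. destruct b; simpl; auto.
Qed.

Lemma Ex_app1 : forall L a g, Ex (L ++ a :: nil) g = Ex L (fun w => (1 - a) * g w + a * g (S w)).
Proof.
  induction L; intros b g; simpl; auto.
  rewrite IHL, IHL. reflexivity.
Qed.

Lemma conn : forall p n g,
  sumL (fun o => outcome_prob p 0 o * g (count_ones o)) (outcomes n) = Ex (map p (seq 0 n)) g.
Proof.
  intros p n. induction n; intros g.
  - simpl. unfold count_ones; simpl. ring.
  - rewrite seq_S, map_app. simpl map. rewrite Ex_app1. rewrite <- IHn.
    simpl outcomes. rewrite sumL_concat, sumL_map.
    apply sumL_ext_in. intros o Ho. pose proof (outcomes_len _ _ Ho) as Hl.
    simpl. rewrite !outcome_prob_app, !count_app, Hl. simpl.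
    rewrite Nat.add_0_r. replace (count_ones o + 1)%nat with (S (count_ones o)) by lia. ring.
Qed.

Lemma tail_conn : forall p n k, bernoulli_sum_tail p n k = Ex (map p (seq 0 n)) (ind k).
Proof.
  intros. unfold bernoulli_sum_tail. rewrite fold_sumL. rewrite <- conn.
  apply sumL_ext_in. intros o _. unfold ind. destruct (k <=? count_ones o)%nat; ring.
Qed.


Lemma ex_floor : forall x, 0 <= x -> exists n : nat, INR n <= x < INR n + 1.
Proof.
  intros x Hx. destruct (archimed x) as [H1 H2].
  assert (Hup : (1 <= up x)%Z).
  { destruct (Z.lt_ge_cases (up x) 1) as [Hl|Hl]; [|lia].
    assert (up x <= 0)%Z by lia. apply IZR_le in H. simpl in H. lra. }
  exists (Z.to_nat (up x - 1)). rewrite INR_IZR_INZ, Z2Nat.id by lia.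
  rewrite minus_IZR. simpl. lra.
Qed.

Lemma Rdiv_le_0_compat : forall a b, 0 <= a -> 0 < b -> 0 <= a / b.
Proof. intros. unfold Rdiv. apply Rmult_le_pos; auto. left; apply Rinv_0_lt_compat; auto. Qed.

Lemma Rdiv_le_1 : forall a b, 0 < b -> a <= b -> a / b <= 1.
Proof. intros. apply Rmult_le_reg_r with b; auto. unfold Rdiv. rewrite Rmult_assoc, Rinv_l; lra. Qed.

Section Poi.
Variable lam : R.
Hypothesis Hlam : 0 < lam.

Definition pp j := poisson_pmf lam j.
Definition GG j := sum_f_R0 (poisson_pmf lam) j.
Definition FF j := poisson_tail lam j.

Lemma pp_pos : forall j, 0 < pp j.
Proof.
  intros j. unfold pp, poisson_pmf. apply Rdiv_lt_0_compat.
  - apply Rmult_lt_0_compat; [apply exp_pos | apply pow_lt; auto].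
  - apply lt_0_INR, lt_O_fact.
Qed.

Lemma pp_S : forall j, pp (S j) = pp j * lam / INR (S j).
Proof.
  intros j. unfold pp, poisson_pmf. rewrite fact_simpl, mult_INR. simpl pow.
  assert (0 < INR (fact j)) by apply lt_0_INR, lt_O_fact.
  assert (0 < INR (S j)) by (apply lt_0_INR; lia).
  field. lra.
Qed.

Lemma GG_S : forall j, GG (S j) = GG j + pp (S j).
Proof. intros; reflexivity. Qed.

Lemma GG_0 : GG 0 = pp 0.
Proof. reflexivity. Qed.

Lemma FF_S : forall j, FF (S j) = 1 - GG j.
Proof. intros; reflexivity. Qed.

Lemma FF_0 : FF 0 = 1.
Proof. reflexivity. Qed.

Lemma FF_rec : forall j, FF j = pp j + FF (S j).
Proof.
  intros [|j].
  - rewrite FF_0, FF_S, GG_0. ring.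
  - rewrite !FF_S, GG_S. ring.
Qed.

Lemma GG_exp : forall n, GG n = exp (- lam) * sum_f_R0 (fun i => / INR (fact i) * lam ^ i) n.
Proof.
  induction n.
  - unfold GG, pp, poisson_pmf; simpl. field.
  - rewrite GG_S, IHn. replace (sum_f_R0 (fun i : nat => / INR (fact i) * lam ^ i) (S n)) with
      (sum_f_R0 (fun i : nat => / INR (fact i) * lam ^ i) n + / INR (fact (S n)) * lam ^ (S n)) by reflexivity.
    unfold pp, poisson_pmf. rewrite Rmult_plus_distr_l. f_equal.
    assert (0 < INR (fact (S n))) by apply lt_0_INR, lt_O_fact. field. lra.
Qed.

Lemma GG_cv : Un_cv GG 1.
Proof.
  intros eps Heps.
  destruct (exist_exp lam) as [l Hl] eqn:E.
  assert (Hl' : l = exp lam). { unfold exp. rewrite E. reflexivity. }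
  subst l.
  destruct (Hl (eps * exp lam)) as [N HN].
  { apply Rmult_gt_0_compat; auto. apply exp_pos. }
  exists N. intros n Hn. specialize (HN n Hn). unfold Rdist in *.
  rewrite GG_exp.
  replace (exp (- lam) * sum_f_R0 (fun i : nat => / INR (fact i) * lam ^ i) n - 1)
    with (exp (- lam) * (sum_f_R0 (fun i : nat => / INR (fact i) * lam ^ i) n - exp lam)).
  2:{ rewrite Rmult_minus_distr_l, <- exp_plus. replace (-lam + lam) with 0 by ring. rewrite exp_0. auto. }
  rewrite Rabs_mult, Rabs_right by (left; apply exp_pos).
  assert (exp (-lam) * exp lam = 1) by (rewrite <- exp_plus; replace (-lam+lam) with 0 by ring; apply exp_0).
  pose proof (exp_pos (-lam)).
  apply Rmult_lt_compat_l with (r := exp (-lam)) in HN; auto. nra.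
Qed.

Lemma GG_mono : forall j t, GG j <= GG (j + t).
Proof.
  intros j t; induction t.
  - rewrite Nat.add_0_r; lra.
  - rewrite Nat.add_succ_r, GG_S. pose proof (pp_pos (S (j + t))). lra.
Qed.

Lemma lim_le : forall j X, (forall n, (n >= j)%nat -> GG n <= X) -> 1 <= X.
Proof.
  intros j X H. destruct (Rle_or_lt 1 X) as [|Hlt]; auto.
  destruct (GG_cv (1 - X)) as [N HN]; [lra|].
  specialize (HN (max N j) (Nat.le_max_l _ _)). specialize (H (max N j) (Nat.le_max_r _ _)).
  unfold Rdist in HN. apply Rabs_def2 in HN. lra.
Qed.

Lemma lim_ge : forall j Y, (forall n, (n >= j)%nat -> Y <= GG n) -> Y <= 1.
Proof.
  intros j X H. destruct (Rle_or_lt X 1) as [|Hlt]; auto.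
  destruct (GG_cv (X - 1)) as [N HN]; [lra|].
  specialize (HN (max N j) (Nat.le_max_l _ _)). specialize (H (max N j) (Nat.le_max_r _ _)).
  unfold Rdist in HN. apply Rabs_def2 in HN. lra.
Qed.

Lemma GG_le1 : forall j, GG j <= 1.
Proof.
  intros j. apply (lim_ge j). intros n Hn. replace n with (j + (n - j))%nat by lia. apply GG_mono.
Qed.

Lemma GG_lt1 : forall j, GG j < 1.
Proof. intros j. pose proof (GG_le1 (S j)). rewrite GG_S in H. pose proof (pp_pos (S j)). lra. Qed.

Lemma GG_pos : forall j, 0 < GG j.
Proof. induction j. rewrite GG_0; apply pp_pos. rewrite GG_S. pose proof (pp_pos (S j)); lra. Qed.

Lemma FF_pos : forall j, 0 < FF j.
Proof. intros [|j]. rewrite FF_0; lra. rewrite FF_S. pose proof (GG_lt1 j); lra. Qed.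

Lemma FF_le1 : forall j, FF j <= 1.
Proof. intros [|j]. rewrite FF_0; lra. rewrite FF_S. pose proof (GG_pos j); lra. Qed.

Lemma FF_decr : forall j t, FF (j + t) <= FF j.
Proof.
  intros j t; induction t. rewrite Nat.add_0_r; lra.
  rewrite Nat.add_succ_r. pose proof (FF_rec (j + t)). pose proof (pp_pos (j+t)). lra.
Qed.

Lemma mills_geo : forall j, INR j + 1 > lam -> FF (S j) <= pp j * (lam / (INR j + 1 - lam)).
Proof.
  intros j Hj. set (c := lam / (INR j + 1 - lam)).
  assert (Hc : 0 <= c) by (unfold c; apply Rdiv_le_0_compat; lra).
  assert (Hcr : forall T, lam / INR (S (j + T)) * (1 + c) <= c).
  { intros T. unfold c. rewrite S_INR, plus_INR.
    assert (0 <= INR T) by apply pos_INR.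
    assert (0 <= INR j) by apply pos_INR.
    apply Rmult_le_reg_r with (INR j + INR T + 1); [lra|].
    apply Rmult_le_reg_r with (INR j + 1 - lam); [lra|].
    field_simplify; try lra; try nra. }
  assert (H : forall T, GG (j + T) - GG j <= c * (pp j - pp (j + T))).
  { induction T.
    - rewrite Nat.add_0_r. lra.
    - rewrite Nat.add_succ_r, GG_S, pp_S.
      pose proof (Hcr T). pose proof (pp_pos (j + T)).
      assert (0 < INR (S (j + T))) by (apply lt_0_INR; lia).
      assert (pp (j + T) * lam / INR (S (j + T)) * (1 + c) <= c * pp (j + T)).
      { replace (pp (j + T) * lam / INR (S (j + T)) * (1 + c)) with (pp (j + T) * (lam / INR (S (j + T)) * (1 + c))) by (field; lra).
        nra. }
      nra. }
  rewrite FF_S.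
  assert (1 <= GG j + c * pp j); [|lra].
  apply (lim_le j). intros n Hn. replace n with (j + (n - j))%nat by lia.
  pose proof (H (n - j)%nat). pose proof (pp_pos (j + (n - j))). nra.
Qed.

Definition QQ j := FF j / pp j.
Definition hh j := GG j / pp j.

Lemma QQ_rec : forall j, QQ j = 1 + QQ (S j) * (lam / INR (S j)).
Proof.
  intros j. unfold QQ. rewrite (FF_rec j), pp_S. pose proof (pp_pos j).
  assert (0 < INR (S j)) by (apply lt_0_INR; lia). field. repeat split; lra.
Qed.

Lemma QQ_pos : forall j, 0 < QQ j.
Proof. intros; unfold QQ; apply Rdiv_lt_0_compat; [apply FF_pos|apply pp_pos]. Qed.

Lemma QQ_geo : forall j, INR j + 1 > lam -> QQ j <= 1 + lam / (INR j + 1 - lam).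
Proof.
  intros j Hj. unfold QQ. rewrite FF_rec. pose proof (mills_geo j Hj). pose proof (pp_pos j).
  assert (FF (S j) / pp j <= lam/(INR j+1-lam)).
  { apply Rmult_le_reg_r with (pp j); auto. unfold Rdiv at 1. rewrite Rmult_assoc, Rinv_l; lra. }
  replace ((pp j + FF (S j))/pp j) with (1 + FF (S j)/pp j) by (field; lra). lra.
Qed.

Lemma QQ_step : forall j t, lam <= INR j + 1 -> QQ j <= QQ (j + t) + INR t.
Proof.
  intros j t Hj. revert j Hj. induction t; intros j Hj.
  - rewrite Nat.add_0_r; simpl; lra.
  - rewrite QQ_rec. assert (lam <= INR (S j) + 1) by (rewrite S_INR; lra).
    specialize (IHt (S j) H). replace (S j + t)%nat with (j + S t)%nat in IHt by lia.
    rewrite (S_INR t).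
    assert (0 < INR (S j)) by (apply lt_0_INR; lia).
    assert (lam / INR (S j) <= 1) by (apply Rdiv_le_1; [lra| rewrite S_INR; lra]).
    assert (0 <= lam / INR (S j)) by (apply Rdiv_le_0_compat; lra).
    pose proof (QQ_pos (S j)).
    assert (QQ (S j) * (lam / INR (S j)) <= QQ (S j) * 1) by (apply Rmult_le_compat_l; lra). lra.
Qed.

Lemma sqrt_facts : 0 < sqrt lam /\ sqrt lam * sqrt lam = lam.
Proof. split; [apply sqrt_lt_R0; auto| apply sqrt_sqrt; lra]. Qed.

Lemma QQ_sqrt : forall j, lam <= INR j -> QQ j <= 2 * sqrt lam + 2.
Proof.
  intros j Hj. destruct sqrt_facts as [Hs Hss].
  destruct (ex_floor (sqrt lam)) as [t [Ht1 Ht2]]; [lra|].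
  pose proof (QQ_step j (S t) ltac:(lra)).
  assert (INR (j + S t) + 1 > lam) by (rewrite plus_INR, S_INR; lra).
  pose proof (QQ_geo _ H0).
  assert (lam / (INR (j + S t) + 1 - lam) <= sqrt lam).
  { rewrite plus_INR, S_INR. apply Rmult_le_reg_r with (INR j + (INR t + 1) + 1 - lam); [lra|].
    field_simplify; try lra; try nra. }
  rewrite S_INR in H. lra.
Qed.

Lemma hh_S : forall j, hh (S j) = 1 + hh j * (INR (S j) / lam).
Proof.
  intros j. unfold hh. rewrite GG_S, pp_S. pose proof (pp_pos j).
  assert (0 < INR (S j)) by (apply lt_0_INR; lia). field. repeat split; lra.
Qed.

Lemma hh_0 : hh 0 = 1.
Proof. unfold hh. rewrite GG_0. pose proof (pp_pos 0). field. lra. Qed.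

Lemma hh_pos : forall j, 0 < hh j.
Proof. intros; unfold hh; apply Rdiv_lt_0_compat; [apply GG_pos|apply pp_pos]. Qed.

Lemma hh_geo : forall j, INR j < lam -> hh j <= lam / (lam - INR j).
Proof.
  induction j; intros Hj.
  - rewrite hh_0. simpl. rewrite Rminus_0_r. unfold Rdiv; rewrite Rinv_r; lra.
  - rewrite S_INR in Hj. assert (INR j < lam) by lra. specialize (IHj H).
    rewrite hh_S, S_INR. pose proof (pos_INR j).
    assert (hh j * ((INR j + 1) / lam) <= lam / (lam - INR j) * ((INR j + 1) / lam)).
    { apply Rmult_le_compat_r; auto. apply Rdiv_le_0_compat; lra. }
    assert (1 + lam / (lam - INR j) * ((INR j + 1) / lam) <= lam / (lam - (INR j + 1))); [|lra].
    apply Rmult_le_reg_r with (lam - (INR j + 1)); [lra|].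
    apply Rmult_le_reg_r with (lam - INR j); [lra|].
    field_simplify; try lra; try nra.
Qed.

Lemma hh_step : forall j t, INR (j + t) <= lam -> hh (j + t) <= hh j + INR t.
Proof.
  intros j t; induction t; intros H.
  - rewrite Nat.add_0_r; simpl; lra.
  - rewrite Nat.add_succ_r in *. rewrite hh_S. rewrite (S_INR t).
    assert (INR (j + t) <= lam) by (rewrite S_INR in H; lra).
    specialize (IHt H0).
    assert (INR (S (j+t)) / lam <= 1) by (apply Rdiv_le_1; lra).
    assert (0 <= INR (S (j+t)) / lam) by (apply Rdiv_le_0_compat; [apply pos_INR| lra]).
    pose proof (hh_pos (j + t)).
    assert (hh (j + t) * (INR (S (j + t)) / lam) <= hh (j+t) * 1) by (apply Rmult_le_compat_l; lra). lra.
Qed.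

Lemma hh_sqrt : forall j, INR j <= lam -> hh j <= 2 * sqrt lam + 1.
Proof.
  intros j Hj. destruct sqrt_facts as [Hs Hss].
  destruct (Rlt_or_le lam 1) as [Hl|Hl].
  - destruct j. rewrite hh_0; lra. rewrite S_INR in Hj. pose proof (pos_INR j). lra.
  - assert (sqrt lam <= lam) by nra.
    destruct (ex_floor (lam - sqrt lam)) as [i0 [Hi1 Hi2]]; [lra|].
    destruct (le_lt_dec j i0) as [Hji|Hji].
    + apply le_INR in Hji. assert (INR j < lam) by lra. pose proof (hh_geo j H0).
      assert (lam / (lam - INR j) <= sqrt lam).
      { apply Rmult_le_reg_r with (lam - INR j); [lra|]. field_simplify; try lra; try nra. }
      lra.
    + replace j with (i0 + (j - i0))%nat by lia.
      replace j with (i0 + (j - i0))%nat in Hj by lia.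
      pose proof (hh_step i0 (j - i0) Hj).
      assert (INR i0 < lam) by lra.
      pose proof (hh_geo i0 H1).
      assert (lam / (lam - INR i0) <= sqrt lam).
      { apply Rmult_le_reg_r with (lam - INR i0); [lra|]. field_simplify; try lra; try nra. }
      rewrite plus_INR in Hj. rewrite minus_INR in * by lia. lra.
Qed.

End Poi.


Lemma exp_pow : forall x n, exp x ^ n = exp (INR n * x).
Proof.
  intros x n; induction n.
  - simpl. rewrite Rmult_0_l, exp_0; auto.
  - simpl pow. rewrite IHn, <- exp_plus. f_equal. rewrite S_INR; ring.
Qed.

Lemma pow_le_one : forall r n, 0 <= r <= 1 -> r ^ n <= 1.
Proof. intros r n H; induction n; simpl; [lra|]. assert (0 <= r ^ n) by (apply pow_le; lra). nra. Qed.

Lemma FF_low : forall lam k, 1 <= lam -> INR k <= lam + 1 -> 1/42 <= FF lam k.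
Proof.
  intros lam k Hl Hk. assert (Hlam : 0 < lam) by lra.
  destruct (sqrt_facts lam Hlam) as [Hs Hss].
  assert (Hs1 : 1 <= sqrt lam). { destruct (Rlt_or_le (sqrt lam) 1); auto. nra. }
  destruct (ex_floor lam) as [m [Hm1 Hm2]]; [lra|].
  assert (Hkm : (k <= S m)%nat).
  { destruct (le_lt_dec k (S m)); auto. assert (S (S m) <= k)%nat by lia. apply le_INR in H. rewrite !S_INR in H. lra. }
  assert (HF1 : FF lam (S m) <= FF lam k).
  { replace (S m) with (k + (S m - k))%nat by lia. apply FF_decr; auto. }
  assert (Hpm : 1 <= pp lam m * (4 * sqrt lam + 3)).
  { pose proof (FF_S lam m) as E.
    assert (E1 : GG lam m = pp lam m * hh lam m) by (unfold hh; pose proof (pp_pos lam Hlam m); field; lra).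
    assert (E2 : FF lam (S m) = QQ lam (S m) * pp lam (S m)) by (unfold QQ; pose proof (pp_pos lam Hlam (S m)); field; lra).
    pose proof (hh_sqrt lam Hlam m Hm1).
    assert (lam <= INR (S m)) by (rewrite S_INR; lra).
    pose proof (QQ_sqrt lam Hlam (S m) H0).
    rewrite (pp_S lam m) in E2.
    assert (0 < INR (S m)) by (apply lt_0_INR; lia).
    assert (lam / INR (S m) <= 1) by (apply Rdiv_le_1; [lra| lra]).
    pose proof (pp_pos lam Hlam m). pose proof (QQ_pos lam Hlam (S m)). pose proof (hh_pos lam Hlam m).
    assert (pp lam m * lam / INR (S m) <= pp lam m) by
      (unfold Rdiv; rewrite Rmult_assoc; fold (lam / INR (S m)); nra).
    assert (FF lam (S m) <= QQ lam (S m) * pp lam m) by (rewrite E2; nra).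
    assert (GG lam m <= pp lam m * (2 * sqrt lam + 1)) by (rewrite E1; nra).
    nra. }
  destruct (ex_floor (sqrt lam)) as [s [Hs1' Hs2']]; [lra|].
  assert (Hsl : INR s * INR s <= lam) by (pose proof (pos_INR s); nra).
  set (r := lam / (lam + INR s)).
  assert (Hr0 : 0 < r) by (unfold r; pose proof (pos_INR s); apply Rdiv_lt_0_compat; lra).
  assert (Hr1 : r <= 1) by (unfold r; pose proof (pos_INR s); apply Rdiv_le_1; lra).
  assert (Hrs : 1/3 <= r ^ s).
  { assert (E : r * (1 + INR s / lam) = 1) by (unfold r; pose proof (pos_INR s); field; lra).
    assert (E2 : r ^ s * (1 + INR s / lam) ^ s = 1) by (rewrite <- Rpow_mult_distr, E; apply pow1).
    assert ((1 + INR s / lam) ^ s <= 3).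
    { apply Rle_trans with (exp (INR s / lam) ^ s).
      - apply pow_incr. pose proof (pos_INR s). split. assert (0 <= INR s / lam) by (apply Rdiv_le_0_compat; lra). lra.
        apply exp_ineq1_le.
      - rewrite exp_pow. apply Rle_trans with (exp 1); [|apply exp_le_3].
        destruct (Req_dec (INR s * (INR s / lam)) 1) as [Heq|Hne]; [rewrite Heq; lra|].
        left. apply exp_increasing.
        assert (INR s * (INR s / lam) <= 1); [|lra].
        apply Rmult_le_reg_r with lam; auto. field_simplify; lra. }
    assert (0 < (1 + INR s / lam) ^ s) by (apply pow_lt; pose proof (pos_INR s); assert (0 <= INR s / lam) by (apply Rdiv_le_0_compat; lra); lra).
    nra. }
  assert (Hpt : forall t, (t <= s)%nat -> pp lam m * r ^ t <= pp lam (m + t)).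
  { induction t; intros Ht.
    - rewrite Nat.add_0_r; simpl; lra.
    - rewrite Nat.add_succ_r, pp_S by auto. simpl pow.
      specialize (IHt ltac:(lia)).
      assert (r <= lam / INR (S (m + t))).
      { unfold r. apply le_INR in Ht. rewrite S_INR in *. rewrite plus_INR.
        apply Rmult_le_reg_r with (lam + INR s); [pose proof (pos_INR s); lra|].
        apply Rmult_le_reg_r with (INR m + INR t + 1); [pose proof (pos_INR m); pose proof (pos_INR t); lra|].
        field_simplify; try (pose proof (pos_INR m); pose proof (pos_INR t); lra). nra. }
      pose proof (pp_pos lam Hlam m). pose proof (pp_pos lam Hlam (m + t)).
      assert (0 <= r ^ t) by (apply pow_le; lra).
      replace (pp lam (m + t) * lam / INR (S (m + t))) with (pp lam (m + t) * (lam / INR (S (m + t)))) by (unfold Rdiv; ring).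
      nra. }
  assert (Hrt : forall t, (t <= s)%nat -> r ^ s <= r ^ t).
  { intros t Ht. replace s with (t + (s - t))%nat by lia. rewrite pow_add.
    assert (r ^ (s - t) <= 1) by (apply pow_le_one; lra).
    assert (0 <= r ^ t) by (apply pow_le; lra).
    assert (r ^ t * r ^ (s - t) <= r ^ t * 1) by (apply Rmult_le_compat_l; lra). lra. }
  assert (Hsum : forall t, (t <= s)%nat -> INR t * (pp lam m / 3) <= GG lam (m + t) - GG lam m).
  { induction t; intros Ht.
    - rewrite Nat.add_0_r; simpl; lra.
    - rewrite Nat.add_succ_r, GG_S, S_INR. specialize (IHt ltac:(lia)).
      pose proof (Hpt (S t) Ht). pose proof (Hrt (S t) Ht). rewrite Nat.add_succ_r in H.
      pose proof (pp_pos lam Hlam m). nra. }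
  pose proof (Hsum s (le_n s)). pose proof (GG_le1 lam Hlam (m + s)). rewrite FF_S in HF1.
  assert (Hs2 : sqrt lam <= 2 * INR s).
  { destruct s. simpl in Hs2'. lra. rewrite S_INR in *. pose proof (pos_INR s). lra. }
  pose proof (pp_pos lam Hlam m).
  assert (INR s * pp lam m / 3 <= FF lam k) by lra.
  assert (1 <= 7 * sqrt lam * pp lam m) by nra.
  nra.
Qed.

Lemma FF1_low : forall lam, 0 < lam -> lam < 1 -> lam / 3 <= FF lam 1.
Proof.
  intros lam Hl H1. rewrite (FF_rec lam 1). pose proof (FF_pos lam Hl 2).
  assert (Ep : pp lam 1 = exp (-lam) * lam) by (unfold pp, poisson_pmf; simpl; field).
  rewrite Ep.
  assert (exp (-lam) * exp 1 >= 1).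
  { rewrite <- exp_plus. assert (0 <= -lam + 1) by lra. pose proof (exp_ineq1_le (-lam+1)). lra. }
  pose proof exp_le_3. pose proof (exp_pos (-lam)). pose proof (exp_pos 1).
  assert (exp (-lam) >= 1/3) by (apply Rle_ge; apply Rmult_le_reg_r with (exp 1); auto; nra).
  assert (1/3 * lam <= exp (-lam) * lam) by (apply Rmult_le_compat_r; lra). lra.
Qed.

Lemma d_pmf : forall i x, derivable_pt_lim (fun y => poisson_pmf y i) x
  (match i with O => - poisson_pmf x 0 | S i' => poisson_pmf x i' - poisson_pmf x i end).
Proof.
  intros i x. unfold poisson_pmf.
  assert (Hd1 : derivable_pt_lim (fun y => exp (- y)) x (- exp (- x))).
  { replace (- exp (-x)) with (exp (-x) * (-1)) by ring.
    apply (derivable_pt_lim_comp (fun y => - y) exp x (-1) (exp (-x))).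
    - apply derivable_pt_lim_opp with (f := fun y => y) (l := 1). apply derivable_pt_lim_id.
    - apply derivable_pt_lim_exp. }
  assert (Hd2 : derivable_pt_lim (mult_real_fct (/ INR (fact i)) (fun y => y ^ i)) x (/ INR (fact i) * (INR i * x ^ pred i))).
  { apply derivable_pt_lim_scal. apply derivable_pt_lim_pow. }
  pose proof (derivable_pt_lim_mult _ _ x _ _ Hd1 Hd2) as H.
  assert (E : forall y, exp (- y) * y ^ i / INR (fact i) = ((fun y => exp (- y)) * mult_real_fct (/ INR (fact i)) (fun y => y ^ i))%F y).
  { intros y. unfold mult_fct, mult_real_fct. unfold Rdiv. ring. }
  assert (Hval : match i with O => - (exp (- x) * x ^ 0 / INR (fact 0)) | S i' => exp (- x) * x ^ i' / INR (fact i') - exp (- x) * x ^ i / INR (fact i) end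
     = - exp (- x) * mult_real_fct (/ INR (fact i)) (fun y => y ^ i) x + exp (- x) * (/ INR (fact i) * (INR i * x ^ Init.Nat.pred i))).
  { unfold mult_real_fct. destruct i.
    - simpl. field.
    - change (Init.Nat.pred (S i)) with i. change (x ^ S i) with (x * x ^ i).
      rewrite fact_simpl, mult_INR, S_INR. pose proof (lt_0_INR _ (lt_O_fact i)). field.
      split; [lra|]. pose proof (pos_INR i); lra. }
  rewrite Hval.
  unfold derivable_pt_lim in *. intros eps Heps. destruct (H eps Heps) as [del Hdel].
  exists del. intros h Hh0 Hh. cbv beta. rewrite !E. apply Hdel; auto.
Qed.

Lemma d_sum : forall j x, derivable_pt_lim (fun y => sum_f_R0 (poisson_pmf y) j) x (- poisson_pmf x j).
Proof.
  induction j; intros x.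
  - simpl. apply (d_pmf 0 x).
  - simpl. pose proof (derivable_pt_lim_plus _ _ x _ _ (IHj x) (d_pmf (S j) x)) as H.
    replace (- poisson_pmf x (S j)) with (- poisson_pmf x j + (poisson_pmf x j - poisson_pmf x (S j))) by ring.
    exact H.
Qed.

Lemma pmf_nonneg : forall x j, 0 <= x -> 0 <= poisson_pmf x j.
Proof.
  intros. unfold poisson_pmf. apply Rdiv_le_0_compat.
  - apply Rmult_le_pos; [left; apply exp_pos| apply pow_le; auto].
  - apply lt_0_INR, lt_O_fact.
Qed.

Lemma FF_mono : forall nu lam m, 0 < nu -> nu <= lam -> poisson_tail nu m <= poisson_tail lam m.
Proof.
  intros nu lam m Hn Hl. destruct m; [simpl; lra|]. simpl.
  destruct (Req_dec nu lam) as [E|E]; [subst; lra|].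
  destruct (MVT_cor2 (fun y => sum_f_R0 (poisson_pmf y) m) (fun y => - poisson_pmf y m) nu lam) as [c [Hc1 Hc2]].
  - lra.
  - intros c _. apply d_sum.
  - pose proof (pmf_nonneg c m ltac:(lra)). nra.
Qed.


Definition MM lam j := FF lam j / pp lam (pred j).
Definition stf lam k w := if (w <=? k)%nat then - FF lam k * hh lam (pred w) / lam
                          else - (1 - FF lam k) * MM lam w / lam.
Definition phi lam j := hh lam j - hh lam (pred j).

Section Core.
Variable lam : R.
Hypothesis Hlam : 0 < lam.
Variable k : nat.
Hypothesis Hk : (1 <= k)%nat.

Lemma stf_ge : forall w, (k <= w)%nat -> stf lam k w = - (1 - FF lam k) * MM lam w / lam.
Proof.
  intros w Hw. unfold stf. destruct (Nat.leb_spec w k); auto.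
  assert (w = k) by lia. subst w. unfold MM, hh.
  destruct k as [|k']; [lia|]. simpl pred. rewrite FF_S.
  pose proof (pp_pos lam Hlam k'). field. lra.
Qed.

Lemma stein_eq : forall w, lam * stf lam k (S w) - INR w * stf lam k w = ind k w - FF lam k.
Proof.
  intros w. unfold ind. destruct (Nat.leb_spec k w) as [Hkw|Hkw].
  - rewrite !stf_ge by lia. unfold MM. simpl pred.
    destruct w as [|w']; [lia|]. simpl pred.
    rewrite (FF_rec lam (S w')), pp_S.
    pose proof (pp_pos lam Hlam w'). assert (0 < INR (S w')) by (apply lt_0_INR; lia).
    field. lra.
  - unfold stf. destruct (Nat.leb_spec (S w) k); [|lia]. destruct (Nat.leb_spec w k); [|lia].
    simpl pred. destruct w as [|w'].
    + simpl. rewrite hh_0 by auto. field. lra.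
    + simpl pred. rewrite hh_S by auto. field. lra.
Qed.

Lemma g_low : forall j, (1 <= j)%nat -> (S j <= k)%nat ->
  stf lam k (S j) - stf lam k j = - (FF lam k / lam) * phi lam j.
Proof.
  intros j H1 H2. unfold stf, phi. destruct (Nat.leb_spec (S j) k); [|lia]. destruct (Nat.leb_spec j k); [|lia].
  simpl pred. field. lra.
Qed.

Lemma g_high : forall j, (k <= j)%nat ->
  stf lam k (S j) - stf lam k j = ((1 - FF lam k) / lam) * (MM lam j - MM lam (S j)).
Proof.
  intros j H. rewrite !stf_ge by lia. field. lra.
Qed.

Lemma phi_eq : forall j, (1 <= j)%nat -> phi lam j = 1 + hh lam (pred j) * ((INR j - lam) / lam).
Proof.
  intros j Hj. destruct j as [|i]; [lia|]. unfold phi. simpl pred. rewrite hh_S by auto. field. lra.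
Qed.

Lemma phi_nonneg : forall j, (1 <= j)%nat -> 0 <= phi lam j.
Proof.
  intros j Hj. rewrite phi_eq by auto. pose proof (hh_pos lam Hlam (pred j)).
  destruct (Rle_or_lt lam (INR j)) as [Hj2|Hj2].
  - assert (0 <= (INR j - lam) / lam) by (apply Rdiv_le_0_compat; lra). nra.
  - destruct j as [|i]; [lia|]. simpl pred in *. rewrite S_INR in *.
    assert (Hil : INR i < lam) by lra. pose proof (hh_geo lam Hlam i Hil).
    assert (hh lam i * ((lam - (INR i + 1)) / lam) <= lam / (lam - INR i) * ((lam - (INR i + 1)) / lam)).
    { apply Rmult_le_compat_r; auto. apply Rdiv_le_0_compat; lra. }
    assert (lam / (lam - INR i) * ((lam - (INR i + 1)) / lam) <= 1).
    { apply Rmult_le_reg_r with (lam - INR i); [lra|]. field_simplify; lra. }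
    replace ((INR i + 1 - lam) / lam) with (- ((lam - (INR i + 1)) / lam)) by (field; lra). nra.
Qed.

Lemma phi_diff : forall m, (1 <= m)%nat ->
  phi lam (S m) - phi lam m = (hh lam m + (INR m - lam) * phi lam m) / lam.
Proof.
  intros m Hm. unfold phi. destruct m as [|m']; [lia|]. simpl pred.
  rewrite (hh_S lam Hlam (S m')), (hh_S lam Hlam m'). rewrite !S_INR. field. lra.
Qed.

Lemma phi_incr : forall m, (1 <= m)%nat -> lam <= INR m -> 0 <= phi lam (S m) - phi lam m.
Proof.
  intros m Hm Hl. rewrite phi_diff by auto. pose proof (hh_pos lam Hlam m). pose proof (phi_nonneg m Hm).
  apply Rdiv_le_0_compat; auto. nra.
Qed.

Lemma phi_F : forall m, (1 <= m)%nat -> lam < INR m ->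
  (phi lam (S m) - phi lam m) * FF lam m <= (2 * sqrt lam + 2 + 2 * (INR m - lam)) / lam.
Proof.
  intros m Hm Hl. rewrite phi_diff by auto.
  assert (H1 : hh lam m * FF lam m <= 2 * sqrt lam + 2).
  { apply Rle_trans with (QQ lam m); [|apply QQ_sqrt; auto; lra].
    unfold hh, QQ. pose proof (pp_pos lam Hlam m). pose proof (GG_le1 lam Hlam m). pose proof (GG_pos lam Hlam m).
    pose proof (FF_pos lam Hlam m).
    replace (GG lam m / pp lam m * FF lam m) with (GG lam m * (FF lam m / pp lam m)) by (field; lra).
    assert (0 < FF lam m / pp lam m) by (apply Rdiv_lt_0_compat; lra). nra. }
  assert (H2 : phi lam m * FF lam m <= 2).
  { rewrite phi_eq by auto. destruct m as [|i]; [lia|]. simpl pred. rewrite S_INR in *.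
    assert (Hg : INR i + 1 > lam) by lra. pose proof (mills_geo lam Hlam i Hg).
    pose proof (pp_pos lam Hlam i). pose proof (GG_le1 lam Hlam i). pose proof (GG_pos lam Hlam i).
    pose proof (FF_pos lam Hlam (S i)). pose proof (FF_le1 lam Hlam (S i)).
    assert (hh lam i * FF lam (S i) <= lam / (INR i + 1 - lam)).
    { unfold hh. replace (GG lam i / pp lam i * FF lam (S i)) with (GG lam i * (FF lam (S i) / pp lam i)) by (field; lra).
      assert (FF lam (S i) / pp lam i <= lam / (INR i + 1 - lam)).
      { apply Rmult_le_reg_r with (pp lam i); auto. unfold Rdiv at 1. rewrite Rmult_assoc, Rinv_l; lra. }
      assert (0 < FF lam (S i) / pp lam i) by (apply Rdiv_lt_0_compat; lra).
      assert (0 <= lam / (INR i + 1 - lam)) by (apply Rdiv_le_0_compat; lra). nra. }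
    replace ((1 + hh lam i * ((INR i + 1 - lam) / lam)) * FF lam (S i)) with
      (FF lam (S i) + (hh lam i * FF lam (S i)) * ((INR i + 1 - lam) / lam)) by ring.
    assert (H7 : (hh lam i * FF lam (S i)) * ((INR i + 1 - lam) / lam) <= lam / (INR i + 1 - lam) * ((INR i + 1 - lam) / lam)).
    { apply Rmult_le_compat_r; [apply Rdiv_le_0_compat; lra | auto]. }
    replace (lam / (INR i + 1 - lam) * ((INR i + 1 - lam) / lam)) with 1 in H7 by (field; lra). lra. }
  pose proof (FF_pos lam Hlam m).
  unfold Rdiv. rewrite Rmult_assoc, (Rmult_comm (/ lam)), <- Rmult_assoc.
  apply Rmult_le_compat_r; [left; apply Rinv_0_lt_compat; auto|].
  assert ((INR m - lam) * phi lam m * FF lam m <= (INR m - lam) * 2).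
  { rewrite Rmult_assoc. apply Rmult_le_compat_l; lra. }
  nra.
Qed.

Lemma MM_diff : forall j, (k <= j)%nat -> lam <= INR k ->
  0 <= MM lam j - MM lam (S j) <= lam * (lam + 1) / (INR k * (INR k + 1)).
Proof.
  intros j Hj Hlk. assert (Hkj : INR k <= INR j) by (apply le_INR; auto).
  destruct j as [|i]; [lia|].
  assert (Hi : 0 < INR (S i)) by (apply lt_0_INR; lia).
  assert (E : MM lam (S i) = lam / INR (S i) + MM lam (S (S i)) * (lam / INR (S i))).
  { unfold MM. simpl pred. rewrite (FF_rec lam (S i)), (pp_S lam i). pose proof (pp_pos lam Hlam i).
    pose proof (pp_pos lam Hlam (S i)). rewrite (pp_S lam i) in H0. field. repeat split; lra. }
  assert (Hlo : lam / INR (S (S i)) <= MM lam (S (S i))).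
  { unfold MM. simpl pred. rewrite (FF_rec lam (S (S i))). pose proof (FF_pos lam Hlam (S (S (S i)))).
    pose proof (pp_pos lam Hlam (S i)). rewrite (pp_S lam (S i)).
    assert (0 < INR (S (S i))) by (apply lt_0_INR; lia). 
    apply Rmult_le_reg_r with (pp lam (S i)); auto.
    replace ((pp lam (S i) * lam / INR (S (S i)) + FF lam (S (S (S i)))) / pp lam (S i) * pp lam (S i))
      with (pp lam (S i) * lam / INR (S (S i)) + FF lam (S (S (S i)))) by (field; lra).
    replace (lam / INR (S (S i)) * pp lam (S i)) with (pp lam (S i) * lam / INR (S (S i))) by (field; lra). lra. }
  assert (Hhi : MM lam (S (S i)) <= lam / (INR (S i) + 1 - lam)).
  { unfold MM. simpl pred. assert (INR (S i) + 1 > lam) by lra. pose proof (mills_geo lam Hlam (S i) H).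
    pose proof (pp_pos lam Hlam (S i)). apply Rmult_le_reg_r with (pp lam (S i)); auto.
    unfold Rdiv at 1. rewrite Rmult_assoc, Rinv_l; lra. }
  rewrite E. set (j := INR (S i)) in *. set (M := MM lam (S (S i))) in *.
  assert (HS : INR (S (S i)) = j + 1) by (unfold j; rewrite (S_INR (S i)); auto).
  rewrite HS in Hlo.
  replace (lam / j + M * (lam / j) - M) with (lam / j - M * ((j - lam) / j)) by (field; lra).
  split.
  - assert (M * ((j - lam) / j) <= lam / (j + 1 - lam) * ((j - lam) / j)).
    { apply Rmult_le_compat_r; auto. apply Rdiv_le_0_compat; lra. }
    assert (lam / (j + 1 - lam) * ((j - lam) / j) <= lam / j).
    { apply Rmult_le_reg_r with (j + 1 - lam); [lra|]. apply Rmult_le_reg_r with j; [lra|].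
      field_simplify; try lra; nra. }
    lra.
  - assert (lam / (j + 1) * ((j - lam) / j) <= M * ((j - lam) / j)).
    { apply Rmult_le_compat_r; auto. apply Rdiv_le_0_compat; lra. }
    assert (lam / j - lam / (j + 1) * ((j - lam) / j) = lam * (lam + 1) / (j * (j + 1))) by (field; lra).
    assert (lam * (lam + 1) / (j * (j + 1)) <= lam * (lam + 1) / (INR k * (INR k + 1))).
    { apply Rmult_le_reg_r with (j * (j+1)); [nra|]. apply Rmult_le_reg_r with (INR k * (INR k + 1)); [nra|].
      field_simplify; try nra. 
      assert (INR k * (INR k + 1) <= j * (j + 1)) by nra.
      assert (0 <= lam * (lam + 1)) by nra. nra. }
    lra.
Qed.

End Core.


Lemma tele : forall (a : nat -> R) j n, sumL (fun m => a (S m) - a m) (seq j n) = a (j + n)%nat - a j.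
Proof.
  intros a j n. revert j. induction n; intros j; simpl.
  - rewrite Nat.add_0_r; ring.
  - rewrite IHn. replace (S j + n)%nat with (j + S n)%nat by lia. ring.
Qed.

Lemma sumL_ind_all1 : forall (c : nat -> R) j n w, (j + n <= S w)%nat ->
  sumL (fun m => c m * ind m w) (seq j n) = sumL c (seq j n).
Proof.
  intros c j n w H. apply sumL_ext_in. intros m Hm. apply in_seq in Hm.
  unfold ind. destruct (Nat.leb_spec m w); [ring|lia].
Qed.

Lemma sumL_nonneg : forall A (f : A -> R) xs, (forall x, In x xs -> 0 <= f x) -> 0 <= sumL f xs.
Proof.
  induction xs; intros H; simpl; [lra|]. pose proof (H a (or_introl eq_refl)).
  assert (0 <= sumL f xs) by (apply IHxs; intros; apply H; simpl; auto). lra.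
Qed.

Lemma sumL_const_le : forall A (f : A -> R) xs c, (forall x, In x xs -> f x <= c) -> sumL f xs <= INR (length xs) * c.
Proof.
  induction xs; intros c H. simpl; lra. cbn [sumL length]. pose proof (H a (or_introl eq_refl)).
  assert (sumL f xs <= INR (length xs) * c) by (apply IHxs; intros; apply H; simpl; auto).
  rewrite S_INR. lra.
Qed.

Lemma AR1 : forall lam d, 0 < lam -> 1 - lam <= d -> 0 <= d -> (2 * sqrt lam + 1) / lam <= 6 + 12 * (d ^ 2 / lam).
Proof.
  intros lam d Hl Hd Hd0. destruct (sqrt_facts lam Hl) as [Hs Hss].
  destruct (Rle_or_lt 1 lam) as [H1|H1].
  - assert (sqrt lam <= lam) by nra.
    assert ((2 * sqrt lam + 1) / lam <= 3) by (apply Rmult_le_reg_r with lam; auto; field_simplify; lra).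
    assert (0 <= d ^ 2 / lam) by (apply Rdiv_le_0_compat; [nra|lra]). lra.
  - assert (sqrt lam < 1) by nra.
    assert ((2 * sqrt lam + 1) / lam <= 3 / lam) by (apply Rmult_le_reg_r with lam; auto; field_simplify; lra).
    assert (0 <= d ^ 2 / lam) by (apply Rdiv_le_0_compat; [nra|lra]).
    destruct (Rle_or_lt (1/2) lam).
    + assert (3 / lam <= 6) by (apply Rmult_le_reg_r with lam; auto; field_simplify; lra). lra.
    + assert (3 / lam <= 12 * (d ^ 2 / lam)) by (apply Rmult_le_reg_r with lam; auto; field_simplify; nra). lra.
Qed.

Lemma AR2 : forall lam d cn, 0 < lam -> 0 <= cn -> (cn = 0 \/ (1 <= cn /\ cn + 1 <= d)) ->
  cn * (2 * ((2 * sqrt lam + 2 + 2 * d) / lam)) <= 4 + 12 * (d ^ 2 / lam).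
Proof.
  intros lam d cn Hl Hc H. destruct (sqrt_facts lam Hl) as [Hs Hss].
  assert (0 <= d ^ 2 / lam) by (apply Rdiv_le_0_compat; [nra|lra]).
  destruct H as [H|[H1 H2]].
  - subst. lra.
  - assert (cn <= d) by lra.
    assert (2 * d * sqrt lam <= lam + d ^ 2) by (pose proof (pow2_ge_0 (sqrt lam - d)); nra).
    assert (cn * (2 * ((2 * sqrt lam + 2 + 2 * d) / lam)) <= d * (2 * ((2 * sqrt lam + 2 + 2 * d) / lam))).
    { apply Rmult_le_compat_r; auto. apply Rmult_le_pos; [lra|]. apply Rdiv_le_0_compat; lra. }
    assert (d * (2 * ((2 * sqrt lam + 2 + 2 * d) / lam)) <= 4 + 12 * (d ^ 2 / lam)).
    { replace (d * (2 * ((2 * sqrt lam + 2 + 2 * d) / lam))) with ((4 * d * sqrt lam + 4 * d + 4 * d ^ 2) * / lam) by (field; lra).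
      replace (4 + 12 * (d ^ 2 / lam)) with ((4 * lam + 12 * d ^ 2) * / lam) by (field; lra).
      apply Rmult_le_compat_r; [left; apply Rinv_0_lt_compat; auto|]. nra. }
    lra.
Qed.

Lemma core : forall lam k l, 0 < lam -> lam <= INR k -> okL l ->
  (forall m, lam < INR m -> (m <= k - 1)%nat -> Ex l (ind m) <= 2 * FF lam m) ->
  Rabs (Ex l (fun w => stf lam k (S (S w)) - stf lam k (S w))) <= 100 * (1 + (INR k - lam) ^ 2 / lam) * FF lam k / lam.
Proof.
  intros lam k l Hl Hlk Hok TH.
  assert (Hk1 : (1 <= k)%nat). { destruct k; [simpl in Hlk; lra| lia]. }
  pose proof (phi_incr lam Hl k Hk1) as Phinc. pose proof (phi_F lam Hl k Hk1) as PhiF.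
  pose proof (phi_eq lam Hl k Hk1) as PhiE. pose proof (phi_nonneg lam Hl k Hk1) as PhiN.
  pose proof (g_high lam Hl k Hk1) as GH. pose proof (g_low lam Hl k Hk1) as GL. pose proof (MM_diff lam Hl k Hk1) as MMD.
  destruct (sqrt_facts lam Hl) as [Hs Hss].
  set (d := INR k - lam).
  assert (Hd0 : 0 <= d) by (unfold d; lra).
  assert (Hd1 : 1 - lam <= d) by (unfold d; apply le_INR in Hk1; simpl in Hk1; lra).
  destruct (ex_floor lam) as [n0 [Hn1 Hn2]]; [lra|].
  set (j0 := S n0). set (cnt := (k - 1 - j0)%nat).
  set (Phi0 := 1 + (2 * sqrt lam + 1) / lam).
  set (c := fun m => phi lam (S m) - phi lam m).
  set (Maj := fun w => Phi0 + sumL (fun m => c m * ind m w) (seq j0 cnt)).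
  set (psi := fun w => if (S (S w) <=? k)%nat then phi lam (S w) else 0).
  set (chi := fun w => if (k <=? S w)%nat then stf lam k (S (S w)) - stf lam k (S w) else 0).
  set (cchi := (lam + 1) / (INR k * (INR k + 1))).
  set (FK := FF lam k).
  assert (HFK : 0 < FK) by apply FF_pos, Hl.
  assert (HFK1 : FK <= 1) by apply FF_le1, Hl.
  assert (Hj0 : lam < INR j0) by (unfold j0; rewrite S_INR; lra).
  assert (Hc : forall m, In m (seq j0 cnt) -> 0 <= c m /\ c m * FF lam m <= (2 * sqrt lam + 2 + 2 * d) / lam
                                         /\ Ex l (ind m) <= 2 * FF lam m).
  { intros m Hm. apply in_seq in Hm. assert (Hm1 : (1 <= m)%nat) by (unfold j0 in Hm; lia).
    assert (Hml : lam < INR m) by (apply Rlt_le_trans with (INR j0); auto; apply le_INR; lia).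
    repeat split.
    - apply Phinc; auto; lra.
    - apply Rle_trans with ((2 * sqrt lam + 2 + 2 * (INR m - lam)) / lam); [apply PhiF; auto|].
      assert (INR m <= INR k) by (apply le_INR; unfold cnt in Hm; lia).
      apply Rmult_le_compat_r; [left; apply Rinv_0_lt_compat; auto|]. unfold d. lra.
    - apply TH; auto. unfold cnt in Hm; lia. }
  assert (Hphi0 : forall j, (1 <= j)%nat -> (j <= j0)%nat -> phi lam j <= Phi0).
  { intros j Hj1 Hj2. rewrite PhiE by auto. unfold Phi0.
    assert (INR (pred j) <= lam). { apply Rle_trans with (INR n0); auto. apply le_INR. unfold j0 in Hj2. lia. }
    pose proof (hh_sqrt lam Hl (pred j) H). pose proof (hh_pos lam Hl (pred j)).
    assert ((INR j - lam) / lam <= 1 / lam).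
    { apply Rmult_le_compat_r; [left; apply Rinv_0_lt_compat; auto|].
      assert (INR j <= INR j0) by (apply le_INR; auto). unfold j0 in H2; rewrite S_INR in H2. lra. }
    assert (hh lam (pred j) * ((INR j - lam) / lam) <= hh lam (pred j) * (1 / lam)) by (apply Rmult_le_compat_l; lra).
    assert (hh lam (pred j) * (1 / lam) <= (2 * sqrt lam + 1) / lam).
    { unfold Rdiv. rewrite Rmult_1_l. apply Rmult_le_compat_r; [left; apply Rinv_0_lt_compat; auto| lra]. }
    lra. }
  assert (HPhi0 : 0 <= Phi0).
  { unfold Phi0. assert (0 <= (2 * sqrt lam + 1) / lam) by (apply Rdiv_le_0_compat; lra). lra. }
  assert (Hsumnn : forall w, 0 <= sumL (fun m => c m * ind m w) (seq j0 cnt)).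
  { intros w. apply sumL_nonneg. intros m Hm. destruct (Hc m Hm) as [H1 _]. pose proof (ind_bounds m w). nra. }
  assert (Hpsi : forall w, 0 <= psi w <= Maj w).
  { intros w. unfold psi, Maj. destruct (Nat.leb_spec (S (S w)) k) as [Hw|Hw].
    - split; [apply PhiN; lia|].
      destruct (le_lt_dec (S w) j0) as [Hwj|Hwj].
      + pose proof (Hphi0 (S w) ltac:(lia) Hwj). pose proof (Hsumnn w). lra.
      + assert (Hsplit : cnt = ((S w - j0) + (cnt - (S w - j0)))%nat) by (unfold cnt; lia).
        rewrite Hsplit, seq_app, sumL_app.
        rewrite sumL_ind_all1 by lia.
        unfold c at 1. rewrite tele. replace (j0 + (S w - j0))%nat with (S w) by lia.
        assert (0 <= sumL (fun m => c m * ind m w) (seq (S w) (cnt - (S w - j0)))).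
        { apply sumL_nonneg. intros m Hm. apply in_seq in Hm.
          assert (In m (seq j0 cnt)) by (apply in_seq; unfold cnt in *; lia).
          destruct (Hc m H) as [H1 _]. pose proof (ind_bounds m w). nra. }
        pose proof (Hphi0 j0 ltac:(unfold j0; lia) (le_n _)). lra.
    - split; [lra|]. pose proof (Hsumnn w). lra. }
  assert (HExpsi : 0 <= Ex l psi <= Phi0 + INR cnt * (2 * ((2 * sqrt lam + 2 + 2 * d) / lam))).
  { split.
    - apply Rle_trans with (Ex l (fun _ => 0)); [rewrite Ex_const; lra|]. apply Ex_mono; auto. intros w; apply Hpsi.
    - apply Rle_trans with (Ex l Maj); [apply Ex_mono; auto; intros w; apply Hpsi|].
      unfold Maj. rewrite (Ex_ext l _ (fun w => Phi0 * 1 + 1 * sumL (fun m => c m * ind m w) (seq j0 cnt))) by (intros; ring).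
      rewrite Ex_lin, Ex_const, Ex_sumL.
      replace cnt with (length (seq j0 cnt)) at 2 by apply length_seq.
      assert (sumL (fun m => c m * Ex l (ind m)) (seq j0 cnt) <= INR (length (seq j0 cnt)) * (2 * ((2 * sqrt lam + 2 + 2 * d) / lam))); [|lra].
      apply sumL_const_le. intros m Hm. destruct (Hc m Hm) as [H1 [H2 H3]].
      assert (c m * Ex l (ind m) <= c m * (2 * FF lam m)) by (apply Rmult_le_compat_l; auto). nra. }
  assert (Hchi : forall w, 0 <= chi w <= cchi * ind (k - 1) w).
  { intros w. unfold chi. destruct (Nat.leb_spec k (S w)) as [Hw|Hw].
    - rewrite GH by lia. destruct (MMD (S w) Hw Hlk) as [H1 H2].
      assert (Hi : ind (k - 1) w = 1) by (unfold ind; destruct (Nat.leb_spec (k - 1) w); [auto|lia]).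
      rewrite Hi. fold FK.
      assert (0 <= (1 - FK) / lam) by (apply Rdiv_le_0_compat; lra).
      split; [nra|].
      assert ((1 - FK) / lam <= 1 / lam) by (apply Rmult_le_compat_r; [left; apply Rinv_0_lt_compat; auto| lra]).
      assert ((1 - FK) / lam * (MM lam (S w) - MM lam (S (S w))) <= 1 / lam * (lam * (lam + 1) / (INR k * (INR k + 1)))).
      { apply Rmult_le_compat; auto; try lra. }
      replace (1 / lam * (lam * (lam + 1) / (INR k * (INR k + 1)))) with cchi in H3.
      2:{ unfold cchi. pose proof (pos_INR k). field. split; [lra|]. split; [|lra].
          apply not_0_INR. lia. }
      lra.
    - pose proof (ind_bounds (k - 1) w).
      assert (0 <= cchi). { unfold cchi. apply Rdiv_le_0_compat; [lra|]. apply le_INR in Hk1. simpl in Hk1. nra. }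
      split; nra. }
  assert (HExchi : 0 <= Ex l chi <= cchi * Ex l (ind (k - 1))).
  { split.
    - apply Rle_trans with (Ex l (fun _ => 0)); [rewrite Ex_const; lra|]. apply Ex_mono; auto. intros w; apply Hchi.
    - apply Rle_trans with (Ex l (fun w => cchi * ind (k - 1) w)); [apply Ex_mono; auto; intros w; apply Hchi|].
      rewrite (Ex_ext l _ (fun w => cchi * ind (k - 1) w + 0 * ind (k - 1) w)) by (intros; ring).
      rewrite Ex_lin; lra. }
  assert (Hc3 : Ex l chi <= 42 * FK / lam).
  { assert (Hkpos : 0 < INR k) by (apply lt_0_INR; lia).
    assert (HEk : INR (k - 1) = INR k - 1) by (rewrite minus_INR by lia; simpl; ring).
    destruct (Rlt_or_le lam (INR (k - 1))) as [Hck|Hck].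
    - pose proof (TH (k - 1)%nat Hck (le_n _)).
      assert (Hrec : FF lam (k - 1) = pp lam (k - 1) + FK).
      { unfold FK. pose proof (FF_rec lam (k - 1)). replace (S (k - 1)) with k in H0 by lia. auto. }
      assert (Hpk : pp lam (k - 1) * lam / INR k <= FK).
      { unfold FK. pose proof (FF_rec lam k). pose proof (pp_S lam (k - 1)). replace (S (k - 1)) with k in H1 by lia.
        pose proof (FF_pos lam Hl (S k)). lra. }
      assert (pp lam (k - 1) <= FK * INR k / lam).
      { apply Rmult_le_reg_r with (lam / INR k). apply Rdiv_lt_0_compat; auto.
        replace (FK * INR k / lam * (lam / INR k)) with FK by (field; lra).
        replace (pp lam (k - 1) * (lam / INR k)) with (pp lam (k - 1) * lam / INR k) by (unfold Rdiv; ring). lra. }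
      assert (Ex l (ind (k - 1)) <= 2 * (FK + FK * INR k / lam)) by lra.
      assert (0 <= cchi) by (unfold cchi; apply Rdiv_le_0_compat; nra).
      assert (cchi * Ex l (ind (k - 1)) <= cchi * (2 * (FK + FK * INR k / lam))) by (apply Rmult_le_compat_l; auto).
      assert (cchi * (2 * (FK + FK * INR k / lam)) <= 42 * FK / lam).
      { unfold cchi. apply Rmult_le_reg_r with (INR k * (INR k + 1) * lam). nra.
        replace ((lam + 1) / (INR k * (INR k + 1)) * (2 * (FK + FK * INR k / lam)) * (INR k * (INR k + 1) * lam))
          with (2 * FK * ((lam + 1) * (lam + INR k))) by (field; lra).
        replace (42 * FK / lam * (INR k * (INR k + 1) * lam)) with (2 * FK * (21 * (INR k * (INR k + 1)))) by (field; lra).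
        apply Rmult_le_compat_l; [lra|]. nra. }
      lra.
    - assert (Ex l (ind (k - 1)) <= 1) by (apply Ex_ind_bounds; auto).
      assert (0 <= cchi) by (unfold cchi; apply Rdiv_le_0_compat; nra).
      assert (cchi * Ex l (ind (k - 1)) <= cchi) by nra.
      destruct (Rle_or_lt 1 lam) as [Hl1|Hl1].
      + assert (Hkl1 : INR k <= lam + 1) by lra.
        pose proof (FF_low lam k Hl1 Hkl1) as Hlow. fold FK in Hlow.
        assert (cchi <= 1 / lam).
        { unfold cchi. apply Rmult_le_reg_r with (INR k * (INR k + 1) * lam). nra.
          field_simplify; try lra; try nra. }
        assert (1 / lam <= 42 * FK / lam) by (apply Rmult_le_compat_r; [left; apply Rinv_0_lt_compat; auto| lra]).
        lra.
      + assert (k = 1%nat). { destruct k as [|[|k']]; [lia|auto|]. rewrite HEk in Hck. rewrite !S_INR in Hck. pose proof (pos_INR k'). lra. }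
        subst k. pose proof (FF1_low lam Hl Hl1) as Hlow. fold FK in Hlow. simpl INR in *.
        assert (cchi <= 1) by (unfold cchi; apply Rmult_le_reg_r with 2; [lra|]; field_simplify; lra).
        assert (1 <= 42 * FK / lam).
        { apply Rmult_le_reg_r with lam; auto. field_simplify; lra. }
        lra. }
  assert (Hpt : forall w, stf lam k (S (S w)) - stf lam k (S w) = (- (FK / lam)) * psi w + 1 * chi w).
  { intros w. unfold psi, chi. destruct (Nat.leb_spec (S (S w)) k) as [Hw|Hw].
    - destruct (Nat.leb_spec k (S w)); [lia|]. rewrite GL by lia. fold FK. ring.
    - destruct (Nat.leb_spec k (S w)); [|lia]. ring. }
  rewrite (Ex_ext l _ _ Hpt), Ex_lin.
  assert (HA : Phi0 + INR cnt * (2 * ((2 * sqrt lam + 2 + 2 * d) / lam)) + 42 <= 100 * (1 + d ^ 2 / lam)).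
  { unfold Phi0. pose proof (AR1 lam d Hl Hd1 Hd0).
    assert (INR cnt * (2 * ((2 * sqrt lam + 2 + 2 * d) / lam)) <= 4 + 12 * (d ^ 2 / lam)).
    { apply AR2; auto. apply pos_INR.
      destruct cnt as [|cn] eqn:Ec; [left; reflexivity|right].
      assert (Hcn : (S cn = k - 1 - j0)%nat) by (rewrite <- Ec; reflexivity).
      assert (INR (S cn) = INR k - 1 - INR j0) by (rewrite Hcn, !minus_INR by lia; simpl; ring).
      assert (INR j0 = INR n0 + 1) by (unfold j0; apply S_INR). rewrite S_INR in H0 |- *. pose proof (pos_INR cn). unfold d. split; lra. }
    assert (0 <= d ^ 2 / lam) by (apply Rdiv_le_0_compat; [nra|lra]). lra. }
  fold d.
  assert (Hfl : 0 < FK / lam) by (apply Rdiv_lt_0_compat; lra).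
  apply Rle_trans with (FK / lam * Ex l psi + Ex l chi).
  { apply Rabs_le. split; nra. }
  assert (FK / lam * Ex l psi <= FK / lam * (Phi0 + INR cnt * (2 * ((2 * sqrt lam + 2 + 2 * d) / lam)))) by (apply Rmult_le_compat_l; lra).
  assert (FK / lam * (Phi0 + INR cnt * (2 * ((2 * sqrt lam + 2 + 2 * d) / lam))) + 42 * FK / lam <= 100 * (1 + d ^ 2 / lam) * FK / lam).
  { replace (42 * FK / lam) with (FK / lam * 42) by (field; lra).
    replace (100 * (1 + d ^ 2 / lam) * FK / lam) with (FK / lam * (100 * (1 + d ^ 2 / lam))) by (field; lra).
    rewrite <- Rmult_plus_distr_l. apply Rmult_le_compat_l; lra. }
  lra.
Qed.


Lemma pmaxL_nonneg : forall L, 0 <= pmaxL L.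
Proof. induction L; simpl; [lra|]. unfold pmaxL in *; simpl. apply Rle_trans with (fold_right Rmax 0 L); auto. apply Rmax_r. Qed.

Lemma pmaxL_ge : forall L x, In x L -> x <= pmaxL L.
Proof.
  induction L; intros x H; simpl in H; [contradiction|]. unfold pmaxL; simpl.
  destruct H as [H|H]; [subst; apply Rmax_l|]. apply Rle_trans with (fold_right Rmax 0 L); [apply IHL; auto| apply Rmax_r].
Qed.

Lemma pmaxL_le : forall L X, 0 <= X -> (forall x, In x L -> x <= X) -> pmaxL L <= X.
Proof.
  induction L; intros X H0 H; unfold pmaxL; simpl; [lra|]. apply Rmax_lub; [apply H; simpl; auto|].
  apply IHL; auto. intros; apply H; simpl; auto.
Qed.

Lemma lamL_zero : forall L, okL L -> lamL L <= 0 -> forall x, In x L -> x = 0.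
Proof.
  induction L; intros Hok H x Hx; simpl in Hx; [contradiction|].
  destruct (okL_cons _ _ Hok) as [Ha HL].
  assert (0 <= lamL L).
  { clear -HL. induction L; unfold lamL; simpl; [lra|]. destruct (okL_cons _ _ HL). unfold lamL in IHL. specialize (IHL H0). lra. }
  unfold lamL in H; simpl in H. fold (lamL L) in H.
  destruct Hx as [Hx|Hx]; [subst; lra|]. apply IHL; auto. lra.
Qed.

Lemma XI : forall lam b m d, 0 <= b <= 1/100 -> b * (d ^ 2 / lam) <= 1/100 -> 0 < lam - b ->
  lam < m -> m <= lam + d - 1 -> (m - (lam - b)) ^ 2 / (lam - b) <= d ^ 2 / lam.
Proof.
  intros lam b m d Hb Hbd Hnu Hm Hmk.
  assert (Hl : 0 < lam) by lra.
  set (e := 1 - b). assert (He : 99/100 <= e <= 1) by (unfold e; lra).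
  assert (H1 : 0 < m - (lam - b) <= d - e) by (unfold e; lra).
  assert (H2 : b * d ^ 2 <= lam / 100).
  { apply Rmult_le_reg_r with (/ lam). apply Rinv_0_lt_compat; auto.
    replace (b * d ^ 2 * / lam) with (b * (d ^ 2 / lam)) by (field; lra).
    replace (lam / 100 * / lam) with (1/100) by (field; lra). auto. }
  assert (H3 : (d - e) ^ 2 * lam <= d ^ 2 * (lam - b)).
  { assert (lam * e * e <= lam * e * (2 * d - e)) by (apply Rmult_le_compat_l; [apply Rmult_le_pos; lra | lra]).
    assert (Hee : 1/100 <= e * e) by nra.
    assert (lam / 100 <= lam * e * e).
    { replace (lam / 100) with (lam * (1/100)) by field. rewrite Rmult_assoc. apply Rmult_le_compat_l; lra. }
    replace ((d - e) ^ 2 * lam) with (d ^ 2 * lam - lam * e * (2 * d - e)) by ring.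
    lra. }
  assert (H4 : (m - (lam - b)) ^ 2 <= (d - e) ^ 2) by nra.
  apply Rmult_le_reg_r with ((lam - b) * lam). nra.
  replace ((m - (lam - b)) ^ 2 / (lam - b) * ((lam - b) * lam)) with ((m - (lam - b)) ^ 2 * lam) by (field; lra).
  replace (d ^ 2 / lam * ((lam - b) * lam)) with (d ^ 2 * (lam - b)) by (field; lra).
  nra.
Qed.

Lemma MTL : forall n L, (length L <= n)%nat -> okL L -> 0 < lamL L -> forall k, lamL L <= INR k ->
  pmaxL L * (1 + (INR k - lamL L) ^ 2 / lamL L) <= 1/100 ->
  Rabs (Ex L (ind k) / FF (lamL L) k - 1) <= 100 * pmaxL L * (1 + (INR k - lamL L) ^ 2 / lamL L).
Proof.
  induction n; intros L Hlen Hok Hlam k Hk Hc.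
  - destruct L; [unfold lamL in Hlam; simpl in Hlam; lra| simpl in Hlen; lia].
  - set (lam := lamL L) in *. set (pt := pmaxL L) in *. set (d := INR k - lam) in *.
    set (X := 1 + d ^ 2 / lam) in *. set (F := FF lam k).
    assert (HF : 0 < F) by (apply FF_pos; auto).
    assert (Hd2 : 0 <= d ^ 2 / lam) by (apply Rdiv_le_0_compat; [nra|lra]).
    assert (Hpt0 : 0 <= pt) by apply pmaxL_nonneg.
    assert (Hpt : pt <= 1/100) by (unfold X in Hc; nra).
    assert (Hk1 : (1 <= k)%nat). { destruct k; [simpl in Hk; lra| lia]. }
    assert (HS : Ex L (ind k) - F = sumL (fun bl => fst bl ^ 2 * Ex (snd bl) (fun w => stf lam k (S (S w)) - stf lam k (S w))) (splits L)).
    { rewrite <- stein_bern. fold lam.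
      rewrite (Ex_ext L (ind k) (fun w => 1 * (lam * stf lam k (S w) - INR w * stf lam k w) + F * 1)).
      2:{ intros w. rewrite (stein_eq lam Hlam k Hk1 w). unfold F. ring. }
      rewrite Ex_lin, Ex_const. ring. }
    assert (HB : forall b l, In (b, l) (splits L) ->
      Rabs (Ex l (fun w => stf lam k (S (S w)) - stf lam k (S w))) <= 100 * X * F / lam).
    { intros b l Hbl. destruct (splits_prop L b l Hbl) as [HbL [Hsub [Hlaml Hlenl]]]. fold lam in Hlaml.
      assert (Hokl : okL l) by (intros x Hx; apply Hok; auto).
      assert (Hb : 0 <= b <= 1) by (apply Hok; auto).
      assert (Hbp : b <= pt) by (apply pmaxL_ge; auto).
      unfold X, d, F. apply core; auto.
      intros m Hm Hmk.
      assert (HFm : 0 < FF lam m) by (apply FF_pos; auto).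
      assert (Hm1 : (1 <= m)%nat). { destruct m; [simpl in Hm; lra| lia]. }
      destruct (Rle_or_lt (lamL l) 0) as [Hz|Hz].
      - rewrite Ex_zero by (apply lamL_zero; auto). unfold ind. destruct (Nat.leb_spec m 0); [lia|]. lra.
      - assert (Hlen' : (length l <= n)%nat) by lia.
        assert (Hml : lamL l <= INR m) by lra.
        assert (Hpl : pmaxL l <= pt) by (apply pmaxL_le; auto; intros x Hx; apply pmaxL_ge; auto).
        assert (Hxi : (INR m - lamL l) ^ 2 / lamL l <= d ^ 2 / lam).
        { rewrite Hlaml. apply XI.
          - lra.
          - assert (b * (d ^ 2 / lam) <= pt * (d ^ 2 / lam)) by (apply Rmult_le_compat_r; auto). unfold X in Hc. nra.
          - rewrite Hlaml in Hz; auto.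
          - lra.
          - apply le_INR in Hmk. rewrite minus_INR in Hmk by lia. simpl in Hmk. unfold d. lra. }
        assert (Hcl : pmaxL l * (1 + (INR m - lamL l) ^ 2 / lamL l) <= 1/100).
        { assert (0 <= pmaxL l) by apply pmaxL_nonneg.
          assert (0 <= (INR m - lamL l) ^ 2 / lamL l) by (apply Rdiv_le_0_compat; [nra|lra]).
          apply Rle_trans with (pt * X); [|unfold X; auto]. unfold X. apply Rmult_le_compat; lra. }
        pose proof (IHn l Hlen' Hokl Hz m Hml Hcl) as IH.
        assert (Hr : Ex l (ind m) / FF (lamL l) m <= 2).
        { assert (100 * pmaxL l * (1 + (INR m - lamL l) ^ 2 / lamL l) <= 1) by lra.
          pose proof (Rle_abs (Ex l (ind m) / FF (lamL l) m - 1)). lra. }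
        assert (HFl : 0 < FF (lamL l) m) by (apply FF_pos; auto).
        assert (Ex l (ind m) <= 2 * FF (lamL l) m).
        { apply Rmult_le_reg_r with (/ FF (lamL l) m). apply Rinv_0_lt_compat; auto.
          replace (2 * FF (lamL l) m * / FF (lamL l) m) with 2 by (field; lra). auto. }
        assert (FF (lamL l) m <= FF lam m).
        { apply FF_mono; auto. rewrite Hlaml. lra. }
        lra. }
    assert (Hsum : Rabs (Ex L (ind k) - F) <= pt * lam * (100 * X * F / lam)).
    { rewrite HS. eapply Rle_trans; [apply sumL_abs|].
      apply Rle_trans with (sumL (fun bl => fst bl * (pt * (100 * X * F / lam))) (splits L)).
      - apply sumL_le_in. intros [b l] Hbl. simpl.
        destruct (splits_prop L b l Hbl) as [HbL _].
        assert (Hb : 0 <= b <= 1) by (apply Hok; auto).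
        assert (Hbp : b <= pt) by (apply pmaxL_ge; auto).
        pose proof (HB b l Hbl).
        replace (b * (b * 1)) with (b ^ 2) by ring.
        rewrite Rabs_mult. rewrite (Rabs_right (b ^ 2)) by (apply Rle_ge; nra).
        assert (0 <= Rabs (Ex l (fun w : nat => stf lam k (S (S w)) - stf lam k (S w)))) by apply Rabs_pos.
        assert (b ^ 2 <= b * pt) by nra.
        assert (0 <= 100 * X * F / lam) by (apply Rdiv_le_0_compat; [unfold X; nra| lra]).
        apply Rle_trans with (b * pt * Rabs (Ex l (fun w : nat => stf lam k (S (S w)) - stf lam k (S w)))).
        + apply Rmult_le_compat_r; auto.
        + replace (b * (pt * (100 * X * F / lam))) with (b * pt * (100 * X * F / lam)) by ring.
          apply Rmult_le_compat_l; nra.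
      - rewrite (sumL_ext_in _ _ (fun bl => (pt * (100 * X * F / lam)) * fst bl + 0 * fst bl)) by (intros; ring).
        rewrite sumL_lin, splits_sum. fold lam. lra. }
    replace (pt * lam * (100 * X * F / lam)) with (100 * pt * X * F) in Hsum by (field; lra).
    replace (Ex L (ind k) / F - 1) with ((Ex L (ind k) - F) / F) by (field; lra).
    unfold Rdiv. rewrite Rabs_mult, (Rabs_right (/ F)) by (apply Rle_ge; left; apply Rinv_0_lt_compat; auto).
    apply Rmult_le_reg_r with F; auto. rewrite Rmult_assoc, Rinv_l by lra. lra.
Qed.


Theorem mainTheorem4 :
  exists c C : R, 0 < c /\ 0 < C /\
  forall (n : nat) (p : nat -> R),
    (forall i : nat, (i < n)%nat -> 0 <= p i <= 1) ->
    0 < lam p n ->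
    forall k : nat,
      lam p n <= INR k ->
      let xi := (INR k - lam p n) / sqrt (lam p n) in
      pmax p n * (1 + xi ^ 2) <= c ->
      Rabs (bernoulli_sum_tail p n k / poisson_tail (lam p n) k - 1)
        <= C * pmax p n * (1 + xi ^ 2).
Proof.
  exists (1/100), 100. split; [lra|]. split; [lra|].
  intros n p Hp Hlam k Hk xi Hc.
  set (L := map p (seq 0 n)).
  assert (HL : lam p n = lamL L) by reflexivity.
  assert (HP : pmax p n = pmaxL L) by reflexivity.
  assert (Hxi : xi ^ 2 = (INR k - lamL L) ^ 2 / lamL L).
  { unfold xi. rewrite HL. pose proof (sqrt_lt_R0 _ (eq_ind _ (fun x => 0 < x) Hlam _ HL)).
    pose proof (sqrt_sqrt (lamL L) ltac:(rewrite <- HL; lra)).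
    unfold Rdiv. rewrite Rpow_mult_distr, pow_inv. replace (sqrt (lamL L) ^ 2) with (sqrt (lamL L) * sqrt (lamL L)) by ring. rewrite H0. reflexivity. }
  rewrite tail_conn. fold L. rewrite Hxi in *. rewrite HP in *. rewrite HL in *.
  apply (MTL (length L) L (le_n _)); auto.
  intros x Hx. unfold L in Hx. apply in_map_iff in Hx. destruct Hx as [i [Hi Hin]]. subst.
  apply in_seq in Hin. apply Hp. lia.
Qed.
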